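(* Let $\alpha, \lambda \in (0,1)$, let $k \ge 1$ be an integer, let $V_1,\dots,V_k$ be finite sets, and let $d$ be an integer with $2 \le d \le \min\{|V_1|,\dots,|V_k|\}$. Suppose that $\mathcal{H} \subseteq V_1 \times \dots \times V_k$ satisfies \[ |\mathcal{H}| \le (\alpha\lambda)^k \prod_{i=1}^k |V_i|. \] Then for all but at most \[ (d^k - 1)\,(2\alpha^\lambda)^d \prod_{i=1}^k \binom{|V_i|}{d} \] choices of $W_1 \in \binom{V_1}{d}, \dots, W_k \in \binom{V_k}{d}$, we have \[ |\mathcal{H} \cap (W_1 \times \dots \times W_k)| \le k\lambda d^k. \]
   Context: $\binom{V}{d}$ denotes the family of all $d$-element subsets of $V$. *)

(* Defs.v *)
From HB Require Import structures.
From mathcomp Require Import all_boot all_order all_algebra.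
From mathcomp Require Import reals exp.
Set Implicit Arguments. Unset Strict Implicit. Unset Printing Implicit Defensive.
Import Order.TTheory GRing.Theory Num.Theory.

Definition prodset (T : finType) (k : nat) (V : 'I_k -> {set T})
  : {set {ffun 'I_k -> T}} := [set f : {ffun 'I_k -> T} | [forall i, f i \in V i]].

Definition dchoices (T : finType) (k d : nat) (V : 'I_k -> {set T})
  : {set {ffun 'I_k -> {set T}}} :=
  [set W : {ffun 'I_k -> {set T}} | [forall i, (W i \subset V i) && (#|W i| == d)]].

(* Main.v *)
Require Import Defs.
From HB Require Import structures.
From mathcomp Require Import all_boot all_order all_algebra.
From mathcomp Require Import reals exp.
From mathcomp Require Import zify ring lra.
Import Order.TTheory GRing.Theory Num.Theory.
Set Implicit Arguments. Unset Strict Implicit. Unset Printing Implicit Defensive.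

Lemma bin_mul_id n d t : t <= d -> d <= n ->
  'C(n, t) * 'C(n - t, d - t) = 'C(n, d) * 'C(d, t).
Proof.
move=> td dn.
have h1 := bin_fact (leq_trans td dn).
have h2 : 'C(n - t, d - t) * ((d - t)`! * (n - d)`!) = (n - t)`!.
  have -> : (n - d = (n - t) - (d - t))%N by lia.
  by apply: bin_fact; lia.
have h3 := bin_fact dn. have h4 := bin_fact td.
apply/eqP; rewrite -(eqn_pmul2r (_ : 0 < t`! * (d - t)`! * (n - d)`!)); last first.
  by rewrite !muln_gt0 !fact_gt0.
apply/eqP.
move: h1 h2 h3 h4.
set a := t`!; set b := (d-t)`!; set c := (n-d)`!; set C1 := 'C(n,t); set C2 := 'C(n-t,d-t).
set C3 := 'C(n,d); set C4 := 'C(d,t); set e := (n-t)`!; set f := d`!.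
move=> h1 h2 h3 h4.
have -> : C1 * C2 * (a * b * c) = C1 * (a * (C2 * (b * c))) by ring.
have -> : C3 * C4 * (a * b * c) = C3 * ((C4 * (a * b)) * c) by ring.
by rewrite h2 h4 h1 h3.
Qed.

Lemma bin_ratio s n t : s <= n -> 'C(s, t) * n ^ t <= 'C(n, t) * s ^ t.
Proof.
move=> sn; elim: t => [|t IH]; first by rewrite !bin0.
have e1 := mul_bin_left s t. have e2 := mul_bin_left n t.
have key : (s - t) * n <= (n - t) * s by nia.
rewrite -(leq_pmul2l (ltn0Sn t)).
have -> : t.+1 * ('C(s, t.+1) * n ^ t.+1) = (t.+1 * 'C(s, t.+1)) * n ^ t * n by rewrite expnS; ring.
have -> : t.+1 * ('C(n, t.+1) * s ^ t.+1) = (t.+1 * 'C(n, t.+1)) * s ^ t * s by rewrite expnS; ring.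
rewrite e1 e2.
have -> : (s - t) * 'C(s, t) * n ^ t * n = ('C(s, t) * n ^ t) * ((s - t) * n) by ring.
have -> : (n - t) * 'C(n, t) * s ^ t * s = ('C(n, t) * s ^ t) * ((n - t) * s) by ring.
by apply: leq_mul.
Qed.

Lemma bin_le_exp2 d t : 'C(d, t) <= 2 ^ d.
Proof.
have := cards_draws [set: 'I_d] t; rewrite cardsT card_ord => <-.
have := card_powerset [set: 'I_d]; rewrite cardsT card_ord => <-.
apply: subset_leq_card; apply/subsetP => A; rewrite !inE => /andP[h _].
by [].
Qed.

Lemma exists_sub (T : finType) (A : {set T}) t : t <= #|A| ->
  exists B : {set T}, B \subset A /\ #|B| = t.
Proof.
move=> h; have : 0 < #|[set B : {set T} | B \subset A & #|B| == t]|.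
  by rewrite cards_draws bin_gt0.
case/card_gt0P => B; rewrite inE => /andP[? /eqP]; by exists B.
Qed.
Definition Cset (T : finType) (V : {set T}) (d : nat) : {set {set T}} :=
  [set A : {set T} | (A \subset V) && (#|A| == d)].

Lemma card_Cset (T : finType) (V : {set T}) (d : nat) : #|Cset V d| = 'C(#|V|, d).
Proof. by rewrite -cards_draws; apply: eq_card => A; rewrite !inE. Qed.

Lemma card_supsets (T : finType) (V B : {set T}) (d : nat) : B \subset V -> #|B| <= d ->
  #|[set A in Cset V d | B \subset A]| <= 'C(#|V| - #|B|, d - #|B|).
Proof.
move=> BV Bd.
have -> : (#|V| - #|B| = #|V :\: B|)%N by rewrite cardsD (setIidPr BV).
rewrite -card_Cset.
rewrite -(@card_in_imset _ _ (fun A => A :\: B)); last first.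
  move=> A1 A2; rewrite !inE => /andP[_ h1] /andP[_ h2] e.
  apply/setP=> x; move/setP: e => /(_ x); rewrite !inE.
  case xB: (x \in B) => //=.
  by rewrite (subsetP h1 _ xB) (subsetP h2 _ xB).
apply: subset_leq_card; apply/subsetP => C /imsetP[A]; rewrite !inE.
move=> /andP[/andP[AV /eqP Ad] BA] ->.
rewrite (setSD _ AV) /= cardsD (setIidPr BA) Ad.
by [].
Qed.

Definition upd (T : finType) (k : nat) (j : 'I_k) (W : {ffun 'I_k -> {set T}}) (A : {set T}) :
  {ffun 'I_k -> {set T}} := [ffun i => if i == j then A else W i].

Lemma dchoicesP (T : finType) (k d : nat) (V : 'I_k -> {set T}) (W : {ffun 'I_k -> {set T}}) :
  reflect (forall i, W i \in Cset (V i) d) (W \in dchoices d V).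
Proof.
rewrite inE; apply: (iffP forallP) => h i; have := h i; by rewrite !inE.
Qed.

Lemma upd_in (T : finType) (k d : nat) (V : 'I_k -> {set T}) j W A :
  W \in dchoices d V -> A \in Cset (V j) d -> upd j W A \in dchoices d V.
Proof.
move=> /dchoicesP hW hA; apply/dchoicesP => i; rewrite ffunE.
by case: eqP => [->|].
Qed.

Lemma sym_count (T : finType) (k d : nat) (V : 'I_k -> {set T}) (j : 'I_k)
  (P : pred {ffun 'I_k -> {set T}}) (Q : pred {set T}) :
  (forall W A, P (upd j W A) = P W) ->
  #|[set W in dchoices d V | P W && Q (W j)]| * #|Cset (V j) d|
  = #|[set W in dchoices d V | P W]| * #|[set A in Cset (V j) d | Q A]|.
Proof.
move=> hP; rewrite -!cardsX.
pose phi (p : {ffun 'I_k -> {set T}} * {set T}) := (upd j p.1 p.2, p.1 j).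
have phiK : involutive phi.
  move=> [W A]; rewrite /phi /=; congr (_, _); last by rewrite /upd ffunE eqxx.
  by apply/ffunP => i; rewrite !ffunE; case: eqP => [->|].
have phi_inj : injective phi := inv_inj phiK.
set X1 := setX _ _; set X2 := setX _ _.
have s12 : phi @: X1 \subset X2.
  apply/subsetP => _ /imsetP[[W A] /setXP[/setIdP[hW /andP[pW qW]] hA] ->].
  rewrite /phi /=; apply/setXP; split; apply/setIdP; split.
  - exact: upd_in.
  - by rewrite hP.
  - by move/dchoicesP: hW.
  - exact: qW.
have s21 : phi @: X2 \subset X1.
  apply/subsetP => _ /imsetP[[W A] /setXP[/setIdP[hW pW] /setIdP[hA qA]] ->].
  rewrite /phi /=; apply/setXP; split; first apply/setIdP; first split.
  - exact: upd_in.
  - by rewrite hP pW /upd ffunE eqxx.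
  - by move/dchoicesP: hW.
apply/eqP; rewrite eqn_leq.
rewrite -{1}(card_imset X1 phi_inj) (subset_leq_card s12) /=.
by rewrite -(card_imset X2 phi_inj) (subset_leq_card s21).
Qed.

Lemma card_dchoices (T : finType) (k d : nat) (V : 'I_k -> {set T}) :
  #|dchoices d V| = \prod_(i < k) 'C(#|V i|, d).
Proof.
rewrite (eq_bigr (fun i => #|Cset (V i) d|)); last by move=> i _; rewrite card_Cset.
rewrite -(cardsXn (fun i => Cset (V i) d)) /setXn.
apply: eq_card => W; rewrite !inE; apply/forallP/familyP => h i; have := h i; by rewrite !inE.
Qed.

Definition Xc (T : finType) (k : nat) (J : {set 'I_k}) (H : {set {ffun 'I_k -> T}})
  (W : {ffun 'I_k -> {set T}}) : nat :=
  #|[set f in H | [forall i in J, f i \in W i]]|.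

Lemma Xc_le (T : finType) (k d : nat) (x : T) (J : {set 'I_k}) (H : {set {ffun 'I_k -> T}})
  (W : {ffun 'I_k -> {set T}}) :
  (forall f g, f \in H -> g \in H -> (forall i, i \in J -> f i = g i) -> f = g) ->
  (forall i, i \in J -> #|W i| = d) -> Xc J H W <= d ^ #|J|.
Proof.
move=> inj hW.
pose phi (f : {ffun 'I_k -> T}) : {ffun 'I_k -> T} := [ffun i => if i \in J then f i else x].
rewrite /Xc -(@card_in_imset _ _ phi); last first.
  move=> f g /setIdP[fH _] /setIdP[gH _] e; apply: inj => // i iJ.
  by move/ffunP: e => /(_ i); rewrite !ffunE iJ.
pose F i : {set T} := if i \in J then W i else [set x].
apply: (leq_trans (subset_leq_card (_ : _ \subset setXn F))).
  apply/subsetP => _ /imsetP[f /setIdP[fH /forall_inP hf] ->].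
  apply/setXnP => i; rewrite /F ffunE; case: ifP => iJ; first exact: hf.
  by rewrite inE.
rewrite cardsXn -prod_nat_const big_mkcond /=.
rewrite [leqRHS]big_mkcond /=; apply: leq_prod => i _; rewrite /F; case: ifP => iJ; rewrite ?hW ?cards1 //.
Qed.

Lemma union_bound (I U : finType) (A : {set U}) (r : {set I}) (F : I -> {set U}) :
  (forall u, u \in A -> exists2 i, i \in r & u \in F i) ->
  #|A| <= \sum_(i in r) #|F i|.
Proof.
move=> h.
have e : forall i, #|F i| = \sum_(u : U) (u \in F i : nat).
  by move=> i; rewrite -sum1_card big_mkcond /=; apply: eq_bigr => u _; case: (u \in F i).
rewrite (eq_bigr _ (fun i _ => e i)) exchange_big /= -sum1_card.
rewrite [leqRHS](bigID (fun u => u \in A)) /= -[leqLHS]addn0 leq_add //.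
apply: leq_sum => u uA; have [i ir uFi] := h u uA.
by rewrite (bigD1 i) //= uFi.
Qed.
Local Open Scope ring_scope.

Lemma tail_bound (R : realType) (al la : R) (T : finType) (V S : {set T}) (d : nat) :
  0 < al < 1 -> 0 < la < 1 -> (0 < d)%N -> (d <= #|V|)%N -> S \subset V ->
  #|S|%:R <= al * la * #|V|%:R ->
  #|[set A in Cset V d | la * d%:R < #|[set x in A | x \in S]|%:R]|%:R
    <= (2 * al `^ la) ^+ d * 'C(#|V|, d)%:R.
Proof.
move=> /andP[a0 a1] /andP[l0 l1] d0 dV SV hS.
have dpos : 0 < d%:R :> R by rewrite ltr0n.
have ex : exists t, la * d%:R < t%:R by exists d; nra.
case: (ex_minnP ex) => t Pt tmin.
have td : (t <= d)%N by apply: tmin; nra.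
set n := #|V|; set s := #|S|.
have sn : (s <= n)%N by apply: subset_leq_card.
have cnt : (#|[set A in Cset V d | (la * d%:R < #|[set x in A | x \in S]|%:R)%R]|
   <= 'C(s, t) * 'C(n - t, d - t))%N.
  apply: leq_trans (union_bound (r := Cset S t)
     (F := fun B => [set A in Cset V d | B \subset A]) _) _.
    move=> A /setIdP[AC badA].
    have := tmin _ badA => /exists_sub[B [BA Bt]].
    exists B.
      rewrite inE Bt eqxx andbT; apply: subset_trans BA _.
      by apply/subsetP => x; rewrite inE => /andP[].
    rewrite inE AC /=; apply: subset_trans BA _.
    by apply/subsetP => x; rewrite inE => /andP[].
  rewrite -card_Cset -sum_nat_const; apply: leq_sum => B.
  rewrite inE => /andP[BS /eqP Bt].
  rewrite -Bt; apply: card_supsets; last by rewrite Bt.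
  exact: subset_trans BS SV.
apply: le_trans (_ : ('C(s, t) * 'C(n - t, d - t))%:R <= _); first by rewrite ler_nat.
have key : ('C(s, t) * 'C(n - t, d - t) * n ^ t <= 'C(n, d) * 'C(d, t) * s ^ t)%N.
  rewrite -bin_mul_id // -[leqRHS]mulnA [('C(n - t, _) * _)%N]mulnC mulnA.
  rewrite -[leqLHS]mulnA [('C(n - t, _) * _)%N]mulnC mulnA.
  by rewrite leq_mul2r bin_ratio ?orbT.
set Y := ('C(s, t) * 'C(n - t, d - t))%N.
have n0 : (0 < n)%N by apply: leq_trans dV.
have nt : 0 < (n%:R : R) ^+ t by rewrite exprn_gt0 // ltr0n.
rewrite -(ler_pM2r nt).
have keyR : Y%:R * (n%:R : R) ^+ t <= 'C(n, d)%:R * 'C(d, t)%:R * (s%:R : R) ^+ t.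
  by rewrite -!natrX -!natrM ler_nat.
apply: le_trans keyR _.
have h1 : ('C(d, t)%:R : R) <= 2 ^+ d by rewrite -natrX ler_nat bin_le_exp2.
have h2 : (s%:R : R) ^+ t <= (al * la) ^+ t * (n%:R) ^+ t.
  rewrite -exprMn; apply: lerXn2r => //; rewrite ?nnegrE ?ler0n //.
  by rewrite mulr_ge0 ?ler0n // mulr_ge0 // ltW.
have h3 : (al * la) ^+ t <= (al `^ la) ^+ d.
  apply: le_trans (_ : al ^+ t <= _).
    apply: lerXn2r; rewrite ?nnegrE; try nra.
  rewrite -powR_mulrn; last lra.
  rewrite -powR_mulrn; last exact: powR_ge0.
  rewrite -powRrM; apply: ger_powR; first lra.
  by apply: ltW.
have p0 : 0 <= al `^ la := powR_ge0 _ _.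
have e : (2 * al `^ la) ^+ d * 'C(n, d)%:R * (n%:R : R) ^+ t
    = 'C(n, d)%:R * (2 ^+ d * ((al `^ la) ^+ d * (n%:R : R) ^+ t)).
  by rewrite exprMn; ring.
rewrite e -mulrA; apply: ler_wpM2l; first by rewrite ler0n.
apply: ler_pM; rewrite ?ler0n ?exprn_ge0 //.
apply: le_trans h2 _; apply: ler_wpM2r; first by rewrite exprn_ge0 ?ler0n.
exact: h3.
Qed.

Local Open Scope ring_scope.

Definition claim (R : realType) (al la : R) (T : finType) (k d : nat)
  (V : 'I_k -> {set T}) (m : nat) : Prop :=
 forall (J : {set 'I_k}) (H : {set {ffun 'I_k -> T}}),
 #|J| = m ->
 (forall f, f \in H -> forall i, i \in J -> f i \in V i) ->
 (forall f g, f \in H -> g \in H -> (forall i, i \in J -> f i = g i) -> f = g) ->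
 #|H|%:R <= (al * la) ^+ m * \prod_(i in J) (#|V i|%:R : R) ->
 #|[set W in dchoices d V | m%:R * la * (d ^ m)%:R < (Xc J H W)%:R]|%:R
   <= ((d ^ m)%:R - 1) * (2 * al `^ la) ^+ d * \prod_(i < k) ('C(#|V i|, d)%:R : R).

Lemma step (R : realType) (al la : R) (T : finType) (k d : nat)
  (V : 'I_k -> {set T}) (m : nat) :
  0 < al < 1 -> 0 < la < 1 -> (2 <= d)%N -> (forall i, d <= #|V i|)%N ->
  ((0 < m)%N -> claim al la d V m) -> claim al la d V m.+1.
Proof.
move=> ha hl d2 dV IH J H cardJ HV Hinj HH.
have /card_gt0P [j jJ] : (0 < #|J|)%N by rewrite cardJ.
set J' := J :\ j.
have cJ' : #|J'| = m by move: cardJ; rewrite (cardsD1 j) jJ => -[].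
have jJ' : j \notin J' by rewrite !inE eqxx.
have J'J : forall i, i \in J' -> i \in J by move=> i; rewrite !inE => /andP[].
set P := \prod_(i in J') (#|V i|%:R : R).
have P0 : 0 < P.
  apply: prodr_gt0 => i _; rewrite ltr0n; apply: leq_trans (dV i); exact: ltnW.
have prodJ : \prod_(i in J) (#|V i|%:R : R) = #|V j|%:R * P.
  by rewrite (bigD1 j) //=; congr (_ * _); apply: eq_bigl => i; rewrite !inE andbC.
set c := (al * la) ^+ m * P.
have c0 : 0 < c by rewrite mulr_gt0 // exprn_gt0 // mulr_gt0 //; case/andP: ha; case/andP: hl.
pose Hx x := [set f in H | f j == x].
pose S := [set x in V j | c <= #|Hx x|%:R].
have SV : S \subset V j by apply/subsetP => x; rewrite inE => /andP[].
have sumH : #|H| = (\sum_(x in V j) #|Hx x|)%N.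
  rewrite -sum1_card (partition_big (fun f : {ffun 'I_k -> T} => f j) (fun x => x \in V j) (P := fun f => f \in H) (F := fun _ => 1%N)) /=; last first.
    by move=> f fH; apply: HV.
  apply: eq_bigr => x _; rewrite -sum1_card; apply: eq_bigl => f; by rewrite !inE.
have hS : #|S|%:R <= al * la * #|V j|%:R.
  have h1 : #|S|%:R * c <= #|H|%:R.
    rewrite mulrC mulr_natr -sumr_const sumH natr_sum.
    apply: le_trans (_ : _ <= \sum_(x in S) (#|Hx x|%:R : R)) _.
      by apply: ler_sum => x; rewrite inE => /andP[].
    rewrite [X in _ <= X](bigID (fun x => x \in S)) /= -[X in X <= _]addr0.
    apply: lerD; last by apply: sumr_ge0 => x _; rewrite ler0n.
    rewrite le_eqVlt; apply/orP; left; apply/eqP; apply: eq_bigl => x.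
    by case xS: (x \in S); rewrite ?andbF ?andbT //; rewrite (subsetP SV).
  rewrite -(ler_pM2r c0); apply: le_trans h1 _; apply: le_trans HH _.
  rewrite prodJ /c exprS le_eqVlt; apply/orP; left; apply/eqP; ring.
have Xdec : forall W, Xc J H W = (\sum_(x in W j) Xc J' (Hx x) W)%N.
  move=> W; rewrite /Xc -sum1_card (partition_big (fun f : {ffun 'I_k -> T} => f j)
    (fun x => x \in W j) (P := fun f => f \in [set f in H | [forall i in J, f i \in W i]])
    (F := fun _ => 1%N)) /=; last first.
    by move=> f; rewrite inE => /andP[_ /forall_inP]; apply.
  apply: eq_bigr => x xW; rewrite -sum1_card; apply: eq_bigl => f; rewrite !inE.
  case fH: (f \in H) => //=.
  case: eqP => [fx|]; rewrite ?andbF //= andbT.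
  apply/forall_inP/forall_inP => h i iJ; first exact/h/J'J.
  case: (eqVneq i j) => [->|ij]; first by rewrite fx.
  by apply: h; rewrite !inE ij.
have HxV : forall x f, f \in Hx x -> forall i, i \in J' -> f i \in V i.
  by move=> x f; rewrite inE => /andP[fH _] i /J'J; apply: HV.
have Hxinj : forall x f g, f \in Hx x -> g \in Hx x ->
    (forall i, i \in J' -> f i = g i) -> f = g.
  move=> x f g; rewrite !inE => /andP[fH /eqP fx] /andP[gH /eqP gx] h.
  apply: Hinj => // i iJ; case: (eqVneq i j) => [->|ij]; first by rewrite fx gx.
  by apply: h; rewrite !inE ij.
have Xle : forall x W, W \in dchoices d V -> (Xc J' (Hx x) W <= d ^ m)%N.
  move=> x W /dchoicesP hW; rewrite -cJ'; apply: (Xc_le x); first exact: Hxinj.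
  by move=> i _; have := hW i; rewrite inE => /andP[_ /eqP].
pose bad x W := (m%:R * la * (d ^ m)%:R < (Xc J' (Hx x) W)%:R :> R).
set D := dchoices d V.
pose B1 := [set W in D | la * d%:R < #|[set x in W j | x \in S]|%:R].
pose B2 := [set W in D | [exists x in W j, (x \notin S) && bad x W]].
have cover : [set W in D | m.+1%:R * la * (d ^ m.+1)%:R < (Xc J H W)%:R]
    \subset B1 :|: B2.
  apply/subsetP => W /setIdP[WD badW]; rewrite inE.
  case/boolP: (W \in B1) => // nB1; case/boolP: (W \in B2) => // nB2; exfalso.
  move: badW; rewrite ltNge => /negP; apply.
  have nB1' : #|[set x in W j | x \in S]|%:R <= la * d%:R.
    by move: nB1; rewrite inE WD /= -leNgt.
  have nB2' : forall x, x \in W j -> x \notin S -> ~~ bad x W.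
    move=> x xW xS; apply/negP => bx; move/negP: nB2; apply; rewrite inE WD /=.
    by apply/exists_inP; exists x => //; rewrite xS.
  have hWj : #|W j| = d.
    by move/dchoicesP: WD => /(_ j); rewrite inE => /andP[_ /eqP].
  rewrite Xdec natr_sum (bigID (fun x => x \in S)) /=.
  apply: le_trans (_ : _ <= la * d%:R * (d ^ m)%:R + d%:R * (m%:R * la * (d ^ m)%:R)) _.
    apply: lerD.
      rewrite (eq_bigl (fun x => x \in [set x in W j | x \in S])); last first.
        by move=> x; rewrite inE.
      apply: le_trans (_ : _ <= \sum_(x in [set x in W j | x \in S]) ((d ^ m)%:R : R)) _.
        by apply: ler_sum => x _; rewrite ler_nat Xle.
      by rewrite sumr_const -(mulr_natl ((d ^ m)%:R : R)); apply: ler_wpM2r; rewrite ?ler0n.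
    rewrite (eq_bigl (fun x => x \in [set x in W j | x \notin S])); last first.
      by move=> x; rewrite inE.
    apply: le_trans (_ : _ <= \sum_(x in [set x in W j | x \notin S])
                             (m%:R * la * (d ^ m)%:R : R)) _.
      apply: ler_sum => x; rewrite inE => /andP[xW xS].
      by have := nB2' x xW xS; rewrite /bad -leNgt.
    rewrite sumr_const -(mulr_natl (m%:R * la * (d ^ m)%:R : R)); apply: ler_wpM2r.
      by rewrite mulr_ge0 ?ler0n // mulr_ge0 ?ler0n //; case/andP: hl => l0 _; apply: ltW.
    rewrite ler_nat -hWj; apply: subset_leq_card; apply/subsetP => x.
    by rewrite inE => /andP[].
  rewrite expnS natrM -addn1 natrD le_eqVlt; apply/orP; left; apply/eqP; ring.
set n := #|V j|.
set N := \prod_(i < k) ('C(#|V i|, d)%:R : R).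
set q := (2 * al `^ la) ^+ d.
have Cn0 : (0 < 'C(n, d))%N by rewrite bin_gt0 dV.
have CnR : 0 < ('C(n, d)%:R : R) by rewrite ltr0n.
have cardD : #|D|%:R = N by rewrite card_dchoices natr_prod.
have q0 : 0 <= q by rewrite exprn_ge0 // mulr_ge0 // powR_ge0.
have N0 : 0 <= N by rewrite prodr_ge0 // => i _; rewrite ler0n.
have d0 : (0 < d)%N by apply: leq_trans d2.
have hB1 : #|B1|%:R <= q * N.
  have e := @sym_count T k d V j predT
    (fun A => la * d%:R < #|[set x in A | x \in S]|%:R) (fun _ _ => erefl).
  have e1 : #|B1| = #|[set W in dchoices d V | predT W &&
      (la * d%:R < #|[set x in W j | x \in S]|%:R)]|.
    by apply: eq_card => W; rewrite !inE.
  have e2 : #|[set W in dchoices d V | predT W]| = #|D|.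
    by apply: eq_card => W; rewrite !inE andbT.
  rewrite -e1 e2 card_Cset in e.
  have tb := tail_bound ha hl d0 (dV j) SV hS.
  rewrite -(ler_pM2r CnR) -natrM e natrM cardD.
  by rewrite [q * N]mulrC -mulrA; apply: ler_wpM2l.
pose r := [set x in V j | x \notin S].
pose F x := [set W in dchoices d V | bad x W && (x \in W j)].
have ub : (#|B2| <= \sum_(x in r) #|F x|)%N.
  apply: union_bound => W; rewrite inE => /andP[WD /exists_inP [x xW /andP[xS bx]]].
  exists x; last by rewrite inE WD bx xW.
  rewrite inE xS andbT.
  by move/dchoicesP: WD => /(_ j); rewrite inE => /andP[/subsetP + _]; apply.
have Xsub : forall x W, (Xc J' (Hx x) W <= #|Hx x|)%N.
  by move=> x W; apply: subset_leq_card; apply/subsetP => f; rewrite inE => /andP[].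
have light : forall x, x \in r -> #|Hx x|%:R < c.
  by move=> x; rewrite !inE => /andP[xV]; rewrite xV /= -ltNge.
set K := ((d ^ m)%:R - 1) * q * N.
have hB2 : #|B2|%:R <= (if (0 < m)%N then d%:R * K else 0).
  case: posnP => [m0|mpos].
    have -> : #|B2| = 0%N.
      apply/eqP; rewrite -leqn0; apply: leq_trans ub _; rewrite leqn0.
      apply/eqP; apply: big1 => x xr; apply/eqP; rewrite cards_eq0; apply/eqP.
      apply/setP => W; rewrite !inE; apply/negP => /andP[_ /andP[bx _]].
      have := light x xr; rewrite /c m0 expr0 mul1r /P.
      have -> : J' = set0 by apply/eqP; rewrite -cards_eq0 cJ' m0.
      rewrite big_set0 => hl1.
      have hx0 : #|Hx x| = 0%N by apply/eqP; rewrite -leqn0 -ltnS -(ltr_nat R).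
      move: bx; rewrite /bad m0 mul0r mul0r ltr0n; have := Xsub x W; rewrite hx0.
      by rewrite leqn0 => /eqP ->.
    by [].
  have K0 : 0 <= K.
    rewrite mulr_ge0 // mulr_ge0 // subr_ge0 ler1n expn_gt0 d0 //.
  have badinv : forall x W A, bad x (upd j W A) = bad x W.
    move=> x W A; rewrite /bad /Xc; congr (_ < _%:R); apply: eq_card => f; rewrite !inE.
    congr (_ && _); apply: eq_forallb_in => i iJ'; rewrite ffunE.
    by case: eqP => // eij; move: iJ'; rewrite eij (negbTE jJ').
  have C1 : forall x, x \in V j -> (#|[set A in Cset (V j) d | x \in A]| <= 'C(n.-1, d.-1))%N.
    move=> x xV; have := @card_supsets T (V j) [set x] d; rewrite sub1set xV cards1 subn1.
    move=> /(_ isT d0) h; rewrite subn1 in h; apply: (leq_trans _ h).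
    by apply/eq_leq/eq_card => A; rewrite !inE sub1set.
  have termb : forall x, x \in r -> #|F x|%:R * 'C(n, d)%:R <= K * 'C(n.-1, d.-1)%:R.
    move=> x xr.
    have xV : x \in V j by move: xr; rewrite inE => /andP[].
    have e := @sym_count T k d V j (bad x) (fun A => x \in A) (badinv x).
    rewrite card_Cset in e; rewrite -natrM e natrM.
    apply: ler_pM; rewrite ?ler0n //; last by rewrite ler_nat C1.
    apply: (IH mpos J' (Hx x) cJ' (HxV x) (Hxinj x)).
    by apply: ltW; apply: light.
  rewrite -(ler_pM2r CnR).
  apply: le_trans (_ : _ <= (\sum_(x in r) #|F x|)%:R * 'C(n, d)%:R) _.
    by apply: ler_wpM2r; rewrite ?ler0n // ler_nat.
  rewrite natr_sum mulr_suml.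
  apply: le_trans (_ : _ <= \sum_(x in r) (K * 'C(n.-1, d.-1)%:R)) _.
    by apply: ler_sum => x xr; apply: termb.
  rewrite sumr_const -(mulr_natl (K * 'C(n.-1, d.-1)%:R)).
  apply: le_trans (_ : _ <= n%:R * (K * 'C(n.-1, d.-1)%:R)) _.
    apply: ler_wpM2r; first by rewrite mulr_ge0 ?ler0n.
    by rewrite ler_nat; apply: subset_leq_card; apply/subsetP => x; rewrite inE => /andP[].
  have bd : (n * 'C(n.-1, d.-1) = d * 'C(n, d))%N.
    by rewrite mul_bin_diag prednK.
  rewrite mulrCA -natrM bd natrM le_eqVlt; apply/orP; left; apply/eqP; ring.
apply: le_trans (_ : _ <= #|B1|%:R + #|B2|%:R) _.
  rewrite -natrD ler_nat; apply: leq_trans (subset_leq_card cover) _.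
  by case: (leq_card_setU B1 B2).
apply: le_trans (lerD hB1 hB2) _.
have D2 : 2 <= (d%:R : R) by rewrite ler_nat.
have hint : 0 <= (d%:R - 2) * (q * N) by rewrite mulr_ge0 ?mulr_ge0 // subr_ge0.
move: hB2 => _; case: posnP => [m0|mpos].
  rewrite m0 expn1 addr0; nra.
rewrite /K expnS natrM; nra.
Qed.

Lemma claim_all (R : realType) (al la : R) (T : finType) (k d : nat)
  (V : 'I_k -> {set T}) :
  0 < al < 1 -> 0 < la < 1 -> (2 <= d)%N -> (forall i, d <= #|V i|)%N ->
  forall m, claim al la d V m.+1.
Proof.
move=> ha hl d2 dV; elim => [|m IHm]; apply: step => //.
Qed.

Unset Implicit Arguments.

Theorem lemmaA2 (R : realType) (alpha lambda : R) (k d : nat) (T : finType)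
  (V : 'I_k -> {set T}) (H : {set {ffun 'I_k -> T}}) :
  0 < alpha < 1 -> 0 < lambda < 1 -> (1 <= k)%N ->
  (2 <= d)%N -> (forall i, d <= #|V i|)%N ->
  H \subset prodset V ->
  (#|H|%:R <= (alpha * lambda) ^+ k * \prod_(i < k) (#|V i|%:R : R)) ->
  (#|[set W in dchoices d V |
       k%:R * lambda * (d ^ k)%:R < (#|H :&: prodset (fun i => W i)|%:R : R)]|%:R
   <= ((d ^ k)%:R - 1) * (2 * alpha `^ lambda) ^+ d
        * \prod_(i < k) ('C(#|V i|, d)%:R : R)).
Proof.
move=> ha hl k1 d2 dV HV HH.
have := @claim_all R alpha lambda T k d V ha hl d2 dV k.-1 [set: 'I_k] H; rewrite prednK //.
have pT : \prod_(i in [set: 'I_k]) (#|V i|%:R : R) = \prod_(i < k) (#|V i|%:R : R).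
  by apply: eq_bigl => i; rewrite inE.
rewrite pT; move=> /(_ _ _ _ HH).
have XE : forall W, Xc [set: 'I_k] H W = #|H :&: prodset (fun i => W i)|.
  move=> W; apply: eq_card => f; rewrite !inE; congr (_ && _).
  by apply/forall_inP/forallP => h i; [apply: h; rewrite inE | move=> _; apply: h].
have e : #|[set W in dchoices d V | k%:R * lambda * (d ^ k)%:R < (Xc [set: 'I_k] H W)%:R]|
   = #|[set W in dchoices d V |
       k%:R * lambda * (d ^ k)%:R < (#|H :&: prodset (fun i => W i)|%:R : R)]|.
  by apply: eq_card => W; rewrite !inE XE.
rewrite e; apply.
- by rewrite cardsT card_ord.
- move=> f fH i _; move/subsetP: HV => /(_ f fH); rewrite inE => /forallP; apply.
- by move=> f g _ _ h; apply/ffunP => i; apply: h; rewrite inE.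
Qed.
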